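(* Let $A=\mathrm{diag}(\mathbf{a})$ with $\mathbf{a}\in\mathbb{R}^n$, $\beta>0$, and $f(\mathbf{z})=\frac12\mathbf{z}^*A\mathbf{z}+\frac{\beta}{2}\sum_k|z_k|^4$ on $\mathbb{CS}^{n-1}$. Then the KL exponent of $\min_{\mathbf{z}\in\mathbb{CS}^{n-1}}f(\mathbf{z})$ is $\frac14$.
   Context: $\mathbb{CS}^{n-1}$ is the unit sphere of $\mathbb{C}^n$. For $\mathbf{y}\in\mathbb{CS}^{n-1}$ let $\lambda(\mathbf{y})=\frac12\mathbf{y}^*A\mathbf{y}+\beta\|\mathbf{y}\|_4^4$ and $\|\mathrm{grad} f(\mathbf{y})\|=\sqrt2\,\big\|\frac12A\mathbf{y}+\beta\,\mathrm{diag}(|y_1|^2,\dots,|y_n|^2)\mathbf{y}-\lambda(\mathbf{y})\mathbf{y}\big\|_2$ (norm of the Riemannian Wirtinger gradient). $\mathbf{z}$ is a stationary point if $\mathrm{grad} f(\mathbf{z})=0$. The Łojasiewicz inequality with exponent $\theta\in(0,\frac12]$ holds at a stationary point $\mathbf{z}$ if there are $\delta_{\mathbf{z}},\eta_{\mathbf{z}}>0$ with $|f(\mathbf{y})-f(\mathbf{z})|^{1-\theta}\le\eta_{\mathbf{z}}\|\mathrm{grad} f(\mathbf{y})\|$ for all $\mathbf{y}\in\mathbb{CS}^{n-1}$ with $\|\mathbf{y}-\mathbf{z}\|<\delta_{\mathbf{z}}$. The KL exponent of the problem is the largest $\theta\in(0,\frac12]$ such that this inequality holds at every stationary point. *)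

(* Defs.v *)
From HB Require Import structures.
From mathcomp Require Import all_boot all_order all_algebra.
From mathcomp Require Import complex.
From mathcomp Require Import reals exp.

Set Implicit Arguments.
Unset Strict Implicit.
Unset Printing Implicit Defensive.
Import Order.TTheory GRing.Theory Num.Theory.
Local Open Scope ring_scope.

Section Defs.
Variables (R : realType) (n : nat).

Definition cabs2 (w : R[i]) : R := (complex.Re w) ^+ 2 + (complex.Im w) ^+ 2.

Definition cnorm (y : 'I_n -> R[i]) : R := Num.sqrt (\sum_k cabs2 (y k)).

Definition on_sphere (y : 'I_n -> R[i]) : Prop := \sum_k cabs2 (y k) = 1.

Definition fobj (a : 'I_n -> R) (beta : R) (y : 'I_n -> R[i]) : R :=
  2^-1 * (\sum_k a k * cabs2 (y k)) + beta / 2 * (\sum_k (cabs2 (y k)) ^+ 2).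

Definition lam (a : 'I_n -> R) (beta : R) (y : 'I_n -> R[i]) : R :=
  2^-1 * (\sum_k a k * cabs2 (y k)) + beta * (\sum_k (cabs2 (y k)) ^+ 2).

Definition gvec (a : 'I_n -> R) (beta : R) (y : 'I_n -> R[i]) : 'I_n -> R[i] :=
  fun k => (((2^-1 * a k)%:C)%C + ((beta * cabs2 (y k))%:C)%C - ((lam a beta y)%:C)%C) * y k.

(* norm of the Riemannian Wirtinger gradient: sqrt 2 * || gvec || *)
Definition gradnorm (a : 'I_n -> R) (beta : R) (y : 'I_n -> R[i]) : R :=
  Num.sqrt 2 * cnorm (gvec a beta y).

Definition stationary (a : 'I_n -> R) (beta : R) (z : 'I_n -> R[i]) : Prop :=
  on_sphere z /\ forall k, gvec a beta z k = 0.

Definition KL_at (a : 'I_n -> R) (beta : R) (z : 'I_n -> R[i]) (theta : R) : Prop :=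
  exists delta eta : R, 0 < delta /\ 0 < eta /\
    forall y : 'I_n -> R[i], on_sphere y ->
      cnorm (fun k => y k - z k) < delta ->
      `|fobj a beta y - fobj a beta z| `^ (1 - theta) <= eta * gradnorm a beta y.

Definition KL_valid (a : 'I_n -> R) (beta : R) (theta : R) : Prop :=
  0 < theta <= 2^-1 /\ forall z, stationary a beta z -> KL_at a beta z theta.

Definition KL_exponent_is (a : 'I_n -> R) (beta : R) (theta : R) : Prop :=
  KL_valid a beta theta /\ forall theta', KL_valid a beta theta' -> theta' <= theta.

End Defs.

(* Main.v *)
Require Import Defs.
From HB Require Import structures.
From mathcomp Require Import all_boot all_order all_algebra.
From mathcomp Require Import complex.
From mathcomp Require Import reals exp.
From mathcomp Require Import ring lra.
Import Order.TTheory GRing.Theory Num.Theory.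
Local Open Scope ring_scope.



Section G1.
Variable R : realFieldType.

Lemma term_le_sum (I : finType) (P : pred I) (F : I -> R) j :
  (forall i, P i -> 0 <= F i) -> P j -> F j <= \sum_(i | P i) F i.
Proof.
move=> H Pj; rewrite (bigD1 j) //= lerDl; apply: sumr_ge0 => i /andP[Pi _]; exact: H.
Qed.

Lemma sum_sub_le (I : finType) (P Q : pred I) (F : I -> R) :
  (forall i, Q i -> 0 <= F i) -> (forall i, P i -> Q i) ->
  \sum_(i | P i) F i <= \sum_(i | Q i) F i.
Proof.
move=> H PQ; rewrite [X in _ <= X](bigID P) /=.
rewrite (eq_bigl P); last by move=> i; case Pi: (P i); rewrite ?andbT ?andbF ?PQ.
rewrite lerDl; apply: sumr_ge0 => i /andP[Qi _]; exact: H.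
Qed.

Lemma prod_le_factor (I : finType) (P : pred I) (F : I -> R) j :
  (forall i, P i -> 0 <= F i <= 1) -> P j -> \prod_(i | P i) F i <= F j.
Proof.
move=> H Pj; rewrite (bigD1 j) //=.
have /andP[F0 _] := H j Pj.
apply: ler_piMr => //; apply: prodr_ile1 => i /andP[Pi _]; exact: H.
Qed.

Lemma cs_sum (I : finType) (P : pred I) (x : I -> R) :
  (\sum_(i | P i) x i)^+2 <= (\sum_(i | P i) 1) * \sum_(i | P i) x i ^+ 2.
Proof.
pose K := fun (s c q : R) => 0 <= c /\ 0 <= q /\ s^+2 <= c * q.
suff: K (\sum_(i | P i) x i) (\sum_(i | P i) 1) (\sum_(i | P i) x i ^+ 2) by case=> _ [].
apply: (big_rec3 K); first by rewrite /K expr0n /= mulr0 !lexx.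
move=> i s c q _ [c0 [q0 H]]; rewrite /K; split; first lra.
split; first by have := sqr_ge0 (x i); lra.
have [ce|cn0] := eqVneq c 0.
  rewrite ce mul0r in H; rewrite ce.
  have s0 : s = 0 by apply/eqP; rewrite -sqrf_eq0 eq_le sqr_ge0 andbT.
  rewrite s0; lra.
have cp : 0 < c by rewrite lt_neqAle eq_sym cn0 c0.
have E : 0 <= c * x i ^+ 2 + q - 2 * x i * s.
  have h1 : 0 <= c * (c * x i ^+ 2 + q - 2 * x i * s).
    have -> : c * (c * x i ^+ 2 + q - 2 * x i * s) = (c * x i - s)^+2 + (c * q - s ^+ 2) by ring.
    apply: addr_ge0; [exact: sqr_ge0 | lra].
  by rewrite pmulr_rge0 in h1.
have -> : (1 + c) * (x i ^+ 2 + q) = (x i + s)^+2 + (c * x i ^+ 2 + q - 2 * x i * s) + (c * q - s^+2) by ring.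
lra.
Qed.
End G1.

Lemma eqA (R : realFieldType) (Hs hm b c m V tau0 : R) : hm != 0 -> m != 0 -> b != 0 -> (Hs * (4 / hm ^+ 2) +
   b / 2 * ((2 + 4 * c) * (2 / m) / b ^+ 2 + 10 * (4 / hm ^+ 2))) *
  V + 5 * b * tau0 ^+ 2 =
  Hs * (4 / hm ^+ 2 * V) +
  b / 2 *
  (((2 + 4 * c) * (2 / m) / b ^+ 2 + 10 * (4 / hm ^+ 2)) * V + 10 * tau0 ^+ 2).
Proof. move=> h1 h2 h3; field; by rewrite ?h1 ?h2 ?h3 ?expf_neq0. Qed.

Lemma eqC4 (R : realFieldType) (b c CX V : R) : b != 0 ->
  b^+2 * (2 / b^+2 * (c^+2 + c*CX) * V) = 2 * ((c^+2 + c*CX) * V).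
Proof. move=> h; field; by rewrite ?h ?expf_neq0. Qed.
Lemma eqT (R : realFieldType) (b t0 t : R) : b^+2 * (t0 * t^+2) = 2 * (b^+2 * t^+2 / 2 * t0).
Proof. field; by rewrite ?pnatr_eq0. Qed.
Section G.
Variable R : realFieldType.

Lemma div_le (a x b : R) : 0 < a -> a * x <= b -> x <= b / a.
Proof. by move=> a0 H; rewrite ler_pdivlMr // mulrC. Qed.

Lemma cube_sum (u v : R) : 0 <= u -> 0 <= v -> (u + v)^+3 <= 4 * (u^+3 + v^+3).
Proof.
move=> u0 v0.
have h : 0 <= (u + v) * (u - v)^+2 by apply: mulr_ge0; [lra | exact: sqr_ge0].
have -> : 4 * (u^+3 + v^+3) = (u+v)^+3 + 3 * ((u + v) * (u - v)^+2) by ring.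
lra.
Qed.

Definition Kc (c b Hs m hm Vb : R) :=
  let C3 := 4 / hm^+2 in let CX := 2 / m in
  let A := Hs * C3 + b / 2 * ((2 + 4 * c) * CX / b^+2 + 10 * C3) in
  let B := 5 * b in
  let C4 := 2 / b^+2 * (c^+2 + c * CX) in
  4 * A^+3 * Vb + 4 * B^+3 * C4^+2 + 1.

Lemma Kc_gt0 c b Hs m hm Vb : 0 < b -> 1 <= c -> 0 < m -> 0 < hm -> 0 <= Hs -> 0 <= Vb ->
  0 < Kc c b Hs m hm Vb.
Proof.
move=> b0 c1 m0 hm0 Hs0 Vb0; rewrite /Kc /=.
set C3 := 4 / hm^+2; set CX := 2 / m.
have C30 : 0 <= C3 by rewrite /C3; apply: divr_ge0; [lra| exact: sqr_ge0].
have CX0 : 0 <= CX by rewrite /CX; apply: divr_ge0; lra.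
set A := Hs * C3 + _.
have A0 : 0 <= A.
  rewrite /A; apply: addr_ge0; first exact: mulr_ge0.
  apply: mulr_ge0; first lra.
  apply: addr_ge0; last lra.
  apply: divr_ge0; last exact: sqr_ge0. apply: mulr_ge0; lra.
have : 0 <= 4 * A^+3 * Vb.
  apply: mulr_ge0 => //; apply: mulr_ge0; [lra| exact: exprn_ge0].
have : 0 <= 4 * (5 * b) ^+ 3 * (2 / b ^+ 2 * (c ^+ 2 + c * CX)) ^+ 2.
  apply: mulr_ge0; last exact: sqr_ge0. apply: mulr_ge0; [lra | apply: exprn_ge0; lra].
lra.
Qed.

Lemma final_arith (dF H N NS NT X s tau tau0 tau1 V c b Hs m hm Vb : R) :
  0 < b -> 1 <= c -> 0 < hm -> 0 < m -> 0 <= Hs ->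
  dF = H + b / 2 * N ->
  `|H| <= Hs * tau1 ->
  N = NS + NT -> 0 <= N -> NT <= tau^+2 ->
  b^+2 * NS <= 2 * X + 2 * (2 * b^+2 * tau^+2 + 2 * s^+2) ->
  s^+2 <= c * X ->
  m / 2 * X <= V ->
  hm^+2 / 4 * tau1 <= V ->
  b^+2 * tau^+2 / 2 * tau0 - s^+2 <= c^+2 * V ->
  tau = tau0 + tau1 -> 0 <= tau0 <= 1 -> 0 <= tau1 <= 1 -> 0 <= V <= Vb -> 0 <= X ->
  `|dF|^+3 <= Kc c b Hs m hm Vb * V^+2.
Proof.
move=> b0 c1 hm0 m0 Hs0 edF eH eN N0 eNT eNS es eX et1 et0 etau /andP[t00 t01] /andP[t10 t11]
  /andP[V0 VVb] X0.
rewrite /Kc /=.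
set C3 := 4 / hm^+2; set CX := 2 / m.
set A := Hs * C3 + b / 2 * ((2 + 4 * c) * CX / b^+2 + 10 * C3).
set B := 5 * b.
set C4 := 2 / b^+2 * (c^+2 + c * CX).
have C30 : 0 <= C3 by rewrite /C3; apply: divr_ge0; [lra| exact: sqr_ge0].
have CX0 : 0 <= CX by rewrite /CX; apply: divr_ge0; lra.
have hm20 : 0 < hm^+2 by exact: exprn_gt0.
have b20 : 0 < b^+2 by exact: exprn_gt0.
have t1V : tau1 <= C3 * V.
  rewrite /C3 mulrAC; apply: div_le => //; lra.
have XV : X <= CX * V.
  rewrite /CX mulrAC; apply: div_le => //; lra.
have s2 : s^+2 <= c * CX * V.
  apply: (le_trans es); rewrite -mulrA; apply: ler_wpM2l; lra.
have s20 : 0 <= s^+2 by exact: sqr_ge0.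
have tau2 : tau^+2 <= 2 * tau0^+2 + 2 * C3 * V.
  have t1sq : tau1^+2 <= tau1 by rewrite expr2; apply: ler_piMr.
  have : 0 <= (tau0 - tau1)^+2 by exact: sqr_ge0.
  rewrite etau; nra.
have NSb : NS <= (2 * X + 4 * s^+2) / b^+2 + 4 * tau^+2.
  have : b^+2 * NS <= b^+2 * ((2 * X + 4 * s^+2) / b^+2 + 4 * tau^+2).
    rewrite mulrDr mulrCA divff ?mulr1; last by rewrite gt_eqF.
    lra.
  by rewrite ler_pM2l.
have Nb : N <= ((2 + 4 * c) * CX / b^+2 + 10 * C3) * V + 10 * tau0^+2.
  rewrite eN.
  have h1 : (2 * X + 4 * s^+2) / b^+2 <= (2 + 4 * c) * CX / b^+2 * V.
    rewrite mulrAC; apply: ler_wpM2r; first by rewrite invr_ge0; lra.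
    nra.
  lra.
have A0 : 0 <= A.
  rewrite /A; apply: addr_ge0; first exact: mulr_ge0.
  apply: mulr_ge0; first lra.
  apply: addr_ge0; last lra.
  apply: divr_ge0; last exact: sqr_ge0. apply: mulr_ge0; lra.
have dFb : `|dF| <= A * V + B * tau0^+2.
  rewrite edF; apply: (le_trans (ler_normD _ _)).
  have h1 : `|b / 2 * N| <= b / 2 * (((2 + 4 * c) * CX / b^+2 + 10 * C3) * V + 10 * tau0^+2).
    rewrite ger0_norm; last by apply: mulr_ge0; lra.
    apply: ler_wpM2l => //; lra.
  have h2 : `|H| <= Hs * (C3 * V).
    apply: (le_trans eH); exact: ler_wpM2l.
  have -> : A * V + B * tau0^+2 = Hs * (C3 * V) + b / 2 * (((2 + 4 * c) * CX / b^+2 + 10 * C3) * V + 10 * tau0^+2).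
    by rewrite /A /B /C3 /CX; apply: eqA; rewrite gt_eqF.
  lra.
have t0c : tau0^+3 <= C4 * V.
  have h1 : tau0^+3 <= tau0 * tau^+2.
    have : tau0^+2 <= tau^+2.
      rewrite etau; have : 0 <= tau0 * tau1 by exact: mulr_ge0.
      have : 0 <= tau1^+2 by exact: sqr_ge0. nra.
    rewrite exprS; move=> h; apply: ler_wpM2l => //.
  have h2 : b^+2 * (tau0 * tau^+2) <= b^+2 * (C4 * V).
    rewrite /C4 eqC4 ?gt_eqF // eqT.
    have : c ^+ 2 * V + s^+2 <= (c ^+ 2 + c * CX) * V by rewrite mulrDl; lra.
    lra.
  rewrite ler_pM2l // in h2; exact: le_trans h1 h2.
have p1 : 0 <= A * V by exact: mulr_ge0.
have p2 : 0 <= B * tau0^+2 by apply: mulr_ge0; [rewrite /B; lra | exact: sqr_ge0].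
have c3 : `|dF|^+3 <= (A * V + B * tau0^+2)^+3.
  by apply: lerXn2r; rewrite ?nnegrE //; lra.
have c4 := cube_sum _ _ p1 p2.
have V3 : V^+3 <= Vb * V^+2 by rewrite exprS; apply: ler_wpM2r => //; exact: sqr_ge0.
have t06 : (tau0^+2)^+3 <= C4^+2 * V^+2.
  have q1 : 0 <= tau0^+3 by exact: exprn_ge0.
  have q2 : 0 <= C4 * V by lra.
  rewrite -exprM mulnC exprM -exprMn; apply: lerXn2r; rewrite ?nnegrE //.
have e : 0 <= A^+3 by exact: exprn_ge0.
have e2 : 0 <= B^+3 by apply: exprn_ge0; rewrite /B; lra.
have e3 : 0 <= V^+2 by exact: sqr_ge0.
have f1 : (A * V)^+3 <= A^+3 * Vb * V^+2 by rewrite exprMn -mulrA; exact: ler_wpM2l.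
have f2 : (B * tau0^+2)^+3 <= B^+3 * C4^+2 * V^+2 by rewrite exprMn -mulrA; exact: ler_wpM2l.
rewrite mulrDl mul1r mulrDl.
lra.
Qed.
End G.
Arguments term_le_sum {R I} P F j.
Arguments sum_sub_le {R I} P Q F.
Arguments prod_le_factor {R I P F j}.
Arguments cs_sum {R I} P x.
Arguments Kc {R}.
Arguments Kc_gt0 {R}.
Arguments final_arith {R}.


Lemma term_id (R : realFieldType) (a b p ps ls : R) :
  2^-1 * (a * p) + b / 2 * p ^+ 2 - (2^-1 * (a * ps) + b / 2 * ps ^+ 2) =
  (2^-1 * a + b * ps - ls) * p + b / 2 * (p - ps) ^+ 2 + ls * (p - ps)
  - (2^-1 * a + b * ps - ls) * ps.
Proof. field; by rewrite ?pnatr_eq0. Qed.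

Lemma sq_lb (R : realFieldType) (h r : R) : `|r| <= `|h| / 2 -> h^+2 / 4 <= (h + r)^+2.
Proof.
have E : (h + r)^+2 - h^+2 / 4 = (h / 2 + r) * (3 * h / 2 + r) by field; rewrite ?pnatr_eq0.
move=> H; rewrite -subr_ge0 E; move: H; rewrite ler_norml; case: (lerP 0 h) => hh.
  rewrite ger0_norm // => /andP[l u]; apply: mulr_ge0; lra.
rewrite ltr0_norm // => /andP[l u]; apply: mulr_le0; lra.
Qed.

Section Core.
Variable R : realType.
Variable n : nat.

Definition Fr (a : 'I_n -> R) (b : R) (p : 'I_n -> R) :=
  2^-1 * (\sum_k a k * p k) + b / 2 * (\sum_k (p k)^+2).
Definition Lr (a : 'I_n -> R) (b : R) (p : 'I_n -> R) :=
  2^-1 * (\sum_k a k * p k) + b * (\sum_k (p k)^+2).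
Definition Vr (a : 'I_n -> R) (b : R) (p : 'I_n -> R) :=
  \sum_k (2^-1 * a k + b * p k - Lr a b p)^+2 * p k.

Lemma Lr_sum a b p : Lr a b p = \sum_k p k * (2^-1 * a k + b * p k).
Proof. rewrite /Lr !mulr_sumr -big_split /=; apply: eq_bigr => k _; ring. Qed.

Lemma core (a : 'I_n -> R) (b : R) (ps : 'I_n -> R) :
  0 < b -> (forall k, 0 <= ps k) -> \sum_k ps k = 1 ->
  (forall k, ps k != 0 -> 2^-1 * a k + b * ps k - Lr a b ps = 0) ->
  exists δ K : R, 0 < δ /\ 0 < K /\ forall p : 'I_n -> R,
    (forall k, 0 <= p k) -> \sum_k p k = 1 -> (forall k, `|p k - ps k| < δ) ->
    `|Fr a b p - Fr a b ps|^+3 <= K * (Vr a b p)^+2.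
Proof.
move=> b0 ps0 ps1 stat.
pose ls := Lr a b ps.
pose h k := 2^-1 * a k + b * ps k - ls.
pose S : pred 'I_n := fun k => ps k != 0.
have hS k : S k -> h k = 0 by exact: stat.
have psle1 k : ps k <= 1.
  by rewrite -ps1; apply: (@term_le_sum _ _ (fun _ => true)).
have [j0 Sj0] : exists j, S j.
  case: (pickP S) => [j Sj|H]; first by exists j.
  have : \sum_k ps k = 0.
    by apply: big1 => k _; move: (H k); rewrite /S => /negbFE/eqP.
  by rewrite ps1 => /eqP; rewrite oner_eq0.
pose m := \prod_(k | S k) ps k.
have m0 : 0 < m by apply: prodr_gt0 => k Sk; rewrite lt_neqAle eq_sym ps0 andbT; exact: Sk.
have mle k : S k -> m <= ps k.
  by move=> Sk; apply: prod_le_factor => // i Si; rewrite ps0 psle1.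
pose hm := \prod_(k | h k != 0) Num.min 1 `|h k|.
have hm0 : 0 < hm by apply: prodr_gt0 => k hk; rewrite lt_min ltr01 normr_gt0.
have hmf k : h k != 0 -> 0 <= Num.min 1 `|h k| <= 1.
  by move=> _; rewrite le_min ler01 normr_ge0 ge_min lexx.
have hm1 : hm <= 1 by apply: prodr_ile1.
have hmle k : h k != 0 -> hm <= `|h k|.
  move=> hk; apply: (le_trans (prod_le_factor hmf hk)).
  by rewrite ge_min lexx orbT.
pose Hs := \sum_k `|h k|.
have hleHs k : `|h k| <= Hs.
  by apply: (@term_le_sum _ _ (fun _ => true)).
have Hs0 : 0 <= Hs := le_trans (normr_ge0 _) (hleHs j0).
pose c := \sum_(k | S k) (1:R).
have c1 : 1 <= c by apply: (@term_le_sum _ _ S (fun _ => 1) j0) => // i _; exact: ler01.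
pose δ := Num.min (m / 2) (hm / (2 * (2 * b + Hs))).
have δ0 : 0 < δ.
  rewrite lt_min; apply/andP; split; apply: divr_gt0 => //; lra.
have δm : δ <= m / 2 by rewrite ge_min lexx.
have δh : (2 * b + Hs) * δ <= hm / 2.
  have : δ <= hm / (2 * (2 * b + Hs)) by rewrite ge_min lexx orbT.
  rewrite ler_pdivlMr; last lra.
  lra.
pose K := Kc c b Hs m hm ((Hs + 1)^+2).
exists δ, K; split => //; split; first by apply: Kc_gt0 => //; exact: sqr_ge0.
move=> p p0 p1 pd.
pose d k := p k - ps k.
have dle k : `|d k| <= δ := ltW (pd k).
pose eps := Lr a b p - ls.
pose r k := b * d k - eps.
have gdec k : 2^-1 * a k + b * p k - Lr a b p = h k + r k.
  by rewrite /h /r /eps /d /ls; ring.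
have eps_eq : eps = \sum_k p k * (h k + b * d k).
  have -> : \sum_k p k * (h k + b * d k) =
            \sum_k (p k * (2^-1 * a k + b * p k) - ls * p k).
    by apply: eq_bigr => k _; rewrite /h /d; ring.
  by rewrite sumrB -mulr_sumr p1 mulr1 -Lr_sum.
have pd_nS k : ~~ S k -> p k = d k.
  by move=> nS; rewrite /d (eqP (negbNE nS)) subr0.
have ph k : `|p k * h k| <= δ * `|h k|.
  case Sk: (S k).
    by rewrite hS // mulr0 normr0 mulr0.
  rewrite normrM pd_nS ?Sk //; exact: ler_wpM2r.
have epsb : `|eps| <= (Hs + b) * δ.
  rewrite eps_eq; apply: (le_trans (ler_norm_sum _ _ _)).
  have : \sum_k `|p k * (h k + b * d k)| <= \sum_k (δ * `|h k| + b * δ * p k).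
    apply: ler_sum => k _; rewrite mulrDr; apply: (le_trans (ler_normD _ _)).
    apply: lerD => //.
    rewrite normrM (ger0_norm (p0 k)) normrM (ger0_norm (ltW b0)) [b * δ * p k]mulrC.
    apply: ler_wpM2l; [exact: p0 | apply: ler_wpM2l; [exact: ltW | exact: dle]].
  rewrite big_split /= -mulr_sumr -mulr_sumr p1 mulr1 => H.
  apply: (le_trans H); rewrite /Hs; lra.
have rb k : `|r k| <= hm / 2.
  rewrite /r; apply: (le_trans (ler_normB _ _)).
  rewrite normrM (ger0_norm (ltW b0)).
  have := ler_wpM2l (ltW b0) (dle k); lra.
pose V := Vr a b p.
have Vdef : V = \sum_k (h k + r k)^+2 * p k by apply: eq_bigr => k _; rewrite gdec.
have Vk0 k : 0 <= (h k + r k)^+2 * p k by apply: mulr_ge0; [exact: sqr_ge0|].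
have V0 : 0 <= V by rewrite Vdef; apply: sumr_ge0.
have Vsub (P : pred 'I_n) : \sum_(k | P k) (h k + r k)^+2 * p k <= V.
  by rewrite Vdef; apply: (sum_sub_le P (fun _ => true)).
have Vb : V <= (Hs + 1)^+2.
  rewrite Vdef.
  have : \sum_k (h k + r k)^+2 * p k <= \sum_k (Hs + 1)^+2 * p k.
    apply: ler_sum => k _; apply: ler_wpM2r => //.
    have := hleHs k; have := rb k; rewrite !ler_norml => /andP[r1 r2] /andP[h1 h2].
    have e1 : 0 <= Hs + 1 - (h k + r k) by lra.
    have e2 : 0 <= Hs + 1 + (h k + r k) by lra.
    have := mulr_ge0 e1 e2; rewrite -subr_ge0.
    have -> : (Hs + 1 - (h k + r k)) * (Hs + 1 + (h k + r k)) = (Hs + 1)^+2 - (h k + r k)^+2 by ring.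
    by [].
  by rewrite -mulr_sumr p1 mulr1.
have pS k : S k -> m / 2 <= p k.
  move=> Sk; have := dle k; rewrite ler_norml /d => /andP[e1 _]; have := mle k Sk; lra.
pose T1 : pred 'I_n := fun k => h k != 0.
pose T0 : pred 'I_n := fun k => ~~ S k && (h k == 0).
pose tau := \sum_(k | ~~ S k) p k.
pose tau0 := \sum_(k | T0 k) p k.
pose tau1 := \sum_(k | T1 k) p k.
have T1nS k : T1 k -> ~~ S k.
  by move=> hk; apply/negP => Sk; move: hk; rewrite /T1 hS ?eqxx.
have etau : tau = tau0 + tau1.
  rewrite /tau (bigID (fun k => h k == 0)) /=; congr (_ + _).
  apply: eq_bigl => k; rewrite /T1; case: (boolP (h k == 0)) => hk /=.
    by rewrite andbF.
  by rewrite andbT; apply: T1nS.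
have t00 : 0 <= tau0 by apply: sumr_ge0.
have t10 : 0 <= tau1 by apply: sumr_ge0.
have t01 : tau0 <= 1 by rewrite -p1; apply: (sum_sub_le T0 (fun _ => true)).
have t11 : tau1 <= 1 by rewrite -p1; apply: (sum_sub_le T1 (fun _ => true)).
have ptau k : ~~ S k -> p k <= tau.
  by move=> nS; apply: (term_le_sum (fun k => ~~ S k)).
have et1 : hm^+2 / 4 * tau1 <= V.
  rewrite /tau1 mulr_sumr; apply: le_trans (Vsub T1); apply: ler_sum => k hk.
  apply: ler_wpM2r => //.
  have hh : hm^+2 <= h k ^+ 2.
    rewrite -[h k ^+ 2]real_normK ?num_real //; apply: lerXn2r; rewrite ?nnegrE ?normr_ge0 ?(ltW hm0) //.
    exact: hmle.
  have := @sq_lb _ (h k) (r k).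
  have : `|r k| <= `|h k| / 2 by have := rb k; have := hmle k hk; lra.
  move=> H1 H2; have := H2 H1; lra.
pose X := \sum_(k | S k) r k ^+ 2.
have X0 : 0 <= X by apply: sumr_ge0 => k _; exact: sqr_ge0.
have eX : m / 2 * X <= V.
  rewrite /X mulr_sumr; apply: le_trans (Vsub S); apply: ler_sum => k Sk.
  rewrite hS // add0r mulrC; apply: ler_wpM2l; [exact: sqr_ge0 | exact: pS].
pose s := \sum_(k | S k) r k.
have sumd : \sum_k d k = 0 by rewrite /d sumrB p1 ps1 subrr.
have dsplit : \sum_(k | S k) d k = - tau.
  have := sumd; rewrite (bigID S) /=.
  have -> : \sum_(k | ~~ S k) d k = tau by apply: eq_bigr => k nS; rewrite pd_nS.
  move=> H; apply/eqP; rewrite -subr_eq0 opprK; apply/eqP; exact: H.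
have ces : c * eps = - (b * tau) - s.
  have -> : s = b * \sum_(k | S k) d k - c * eps.
    rewrite /s /r sumrB -mulr_sumr /c mulr_suml.
    by congr (_ - _); apply: eq_bigr => k _; rewrite mul1r.
  rewrite dsplit; ring.
have es : s^+2 <= c * X by exact: cs_sum.
have et0 : b^+2 * tau^+2 / 2 * tau0 - s^+2 <= c^+2 * V.
  have key k : T0 k -> (b^+2 * tau^+2 / 2 - s^+2) * p k <= c^+2 * ((h k + r k)^+2 * p k).
    move=> /andP[nS /eqP h0]; rewrite h0 add0r [c^+2 * _]mulrA; apply: ler_wpM2r => //.
    have cr : c * r k = c * b * p k + b * tau + s.
      have := ces; rewrite /r (pd_nS k nS) => ces'.
      rewrite mulrBr; rewrite ces'; ring.
    rewrite -[c^+2 * r k ^+ 2]exprMn cr.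
    have tau0' : 0 <= tau by rewrite etau; lra.
    have u0 : b * tau <= c * b * p k + b * tau.
      have : 0 <= c * b * p k by apply: mulr_ge0 => //; apply: mulr_ge0; lra.
      lra.
    have bt0 : 0 <= b * tau by apply: mulr_ge0 => //; lra.
    have u2 : (b * tau)^+2 <= (c * b * p k + b * tau)^+2.
      by apply: lerXn2r; rewrite ?nnegrE //; lra.
    have := sqr_ge0 (c * b * p k + b * tau + 2 * s).
    move: u2; rewrite !exprMn; lra.
  have H1 : (b^+2 * tau^+2 / 2 - s^+2) * tau0 <= c^+2 * V.
    rewrite /tau0 mulr_sumr.
    apply: (@le_trans _ _ (c^+2 * \sum_(k | T0 k) (h k + r k)^+2 * p k)).
      by rewrite mulr_sumr; apply: ler_sum => k hk; apply: key.
    apply: ler_wpM2l; [exact: sqr_ge0 | exact: Vsub].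
  have H2 : s^+2 * tau0 <= s^+2 by apply: ler_piMr => //; exact: sqr_ge0.
  move: H1; rewrite mulrBl; lra.
have hps : \sum_k h k * ps k = 0.
  apply: big1 => k _; case Sk: (S k); first by rewrite hS // mul0r.
  by move/negbT: Sk => /negbNE/eqP ->; rewrite mulr0.
have edF : Fr a b p - Fr a b ps = \sum_k h k * p k + b / 2 * \sum_k d k ^+ 2.
  have -> : Fr a b p - Fr a b ps =
      \sum_k (h k * p k + b / 2 * d k ^+ 2 + ls * d k - h k * ps k).
    rewrite /Fr !mulr_sumr -!big_split /= -sumrB; apply: eq_bigr => k _.
    exact: term_id.
  by rewrite sumrB !big_split /= -!mulr_sumr sumd mulr0 addr0 hps subr0.
have eH : `|\sum_k h k * p k| <= Hs * tau1.
  apply: (le_trans (ler_norm_sum _ _ _)).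
  rewrite (bigID T1) /=.
  have -> : \sum_(k | ~~ T1 k) `|h k * p k| = 0.
    by apply: big1 => k; rewrite /T1 negbK => /eqP ->; rewrite mul0r normr0.
  rewrite addr0 /tau1 mulr_sumr; apply: ler_sum => k _.
  rewrite normrM (ger0_norm (p0 k)); apply: ler_wpM2r => //.
pose N := \sum_k d k ^+ 2.
pose NS := \sum_(k | S k) d k ^+ 2.
pose NT := \sum_(k | ~~ S k) d k ^+ 2.
have eN : N = NS + NT by rewrite /N (bigID S).
have N0 : 0 <= N by apply: sumr_ge0 => k _; exact: sqr_ge0.
have eNT : NT <= tau^+2.
  have : NT <= \sum_(k | ~~ S k) p k * tau.
    apply: ler_sum => k nS; rewrite -pd_nS // expr2; apply: ler_wpM2l => //.
    exact: ptau.
  by rewrite -mulr_suml -expr2.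
have eNS : b^+2 * NS <= 2 * X + 2 * (2 * b^+2 * tau^+2 + 2 * s^+2).
  have H1 : b^+2 * NS <= \sum_(k | S k) (2 * r k ^+ 2 + 2 * eps^+2).
    rewrite /NS mulr_sumr; apply: ler_sum => k _.
    have -> : b^+2 * d k^+2 = (r k + eps)^+2 by rewrite /r; ring.
    have := sqr_ge0 (r k - eps); lra.
  have ce2 : \sum_(k | S k) (2 * eps^+2) = 2 * eps^+2 * c.
    by rewrite /c mulr_sumr; apply: eq_bigr => *; rewrite mulr1.
  rewrite big_split /= -mulr_sumr ce2 in H1.
  have H2 : eps^+2 * c <= (c * eps)^+2.
    rewrite exprMn mulrC; apply: ler_wpM2r; first exact: sqr_ge0.
    nra.
  have H3 : (c * eps)^+2 <= 2 * b^+2 * tau^+2 + 2 * s^+2.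
    rewrite ces; have := sqr_ge0 (b * tau - s); lra.
  rewrite -/X in H1; lra.
have := final_arith (Fr a b p - Fr a b ps) (\sum_k h k * p k) N NS NT X s tau tau0 tau1
  V c b Hs m hm ((Hs+1)^+2) b0 c1 hm0 m0 Hs0 edF eH eN N0 eNT eNS es eX et1 et0 etau.
rewrite t00 t01 t10 t11 V0 Vb X0 /=.
by move=> H; apply: H.
Qed.
End Core.
Arguments Fr {R n}.
Arguments Lr {R n}.
Arguments Vr {R n}.
Arguments Lr_sum {R n}.
Arguments core {R n}.


Section Red.
Variable R : realType.

Lemma cabs2_scale (r : R) (w : R[i]) : cabs2 ((r%:C)%C * w) = r^+2 * cabs2 w.
Proof. case: w => x y; rewrite /cabs2 /=. ring. Qed.

Lemma cabs2_ge0 (w : R[i]) : 0 <= cabs2 w.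
Proof. rewrite /cabs2; apply: addr_ge0; exact: sqr_ge0. Qed.

Lemma cabs2_0 : cabs2 (0 : R[i]) = 0.
Proof. by rewrite /cabs2 /= expr0n /= addr0. Qed.

Lemma cplx_coef (u v w : R) : ((u%:C)%C + (v%:C)%C - (w%:C)%C) = ((u + v - w)%:C)%C.
Proof. by rewrite rmorphB rmorphD. Qed.

Lemma cabs2_diff (y z : R[i]) : cabs2 y <= 1 -> cabs2 z <= 1 ->
  (cabs2 y - cabs2 z)^+2 <= 4 * cabs2 (y - z).
Proof. case: y => a b; case: z => c d; rewrite /cabs2 /= => H1 H2.
have E : a ^+ 2 + b ^+ 2 - (c ^+ 2 + d ^+ 2) = (a-c)*(a+c) + (b-d)*(b+d) by ring.
rewrite E.
have CS : ((a-c)*(a+c) + (b-d)*(b+d))^+2 <= ((a-c)^+2 + (b-d)^+2) * ((a+c)^+2 + (b+d)^+2).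
  rewrite -subr_ge0.
  have -> : ((a-c)^+2 + (b-d)^+2) * ((a+c)^+2 + (b+d)^+2) - ((a-c)*(a+c) + (b-d)*(b+d))^+2
     = ((a-c)*(b+d) - (b-d)*(a+c))^+2 by ring.
  exact: sqr_ge0.
have B : (a+c)^+2 + (b+d)^+2 <= 4.
  have -> : (a+c)^+2 + (b+d)^+2 = 2*(a^+2+b^+2) + 2*(c^+2+d^+2) - (a-c)^+2 - (b-d)^+2 by ring.
  have := sqr_ge0 (a-c); have := sqr_ge0 (b-d); lra.
have P : 0 <= (a - c) ^+ 2 + (b - d) ^+ 2 by apply: addr_ge0; apply: sqr_ge0.
apply: (le_trans CS). rewrite mulrC. by apply: ler_wpM2r.
Qed.

Lemma gvec_norm2 n (a : 'I_n -> R) b (y : 'I_n -> R[i]) :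
  \sum_k cabs2 (gvec a b y k) = Vr a b (fun k => cabs2 (y k)).
Proof.
apply: eq_bigr => k _; rewrite /gvec cplx_coef cabs2_scale //.
Qed.

Lemma part_i n (a : 'I_n -> R) (b : R) : 0 < b -> KL_valid a b (4^-1).
Proof.
move=> b0; split; first by apply/andP; split; lra.
move=> z [zs zst].
pose ps k := cabs2 (z k).
have ps0 k : 0 <= ps k := cabs2_ge0 _.
have stat k : ps k != 0 -> 2^-1 * a k + b * ps k - Lr a b ps = 0.
  move=> nz; have := zst k; rewrite /gvec cplx_coef => /eqP; rewrite mulf_eq0 => /orP[].
    move/eqP => /(congr1 (@complex.Re R)) /= ->. by [].
  by move/eqP => e; move: nz; rewrite /ps e cabs2_0 eqxx.
have [δ [K [δ0 [K0 H]]]] := core a b ps b0 ps0 zs stat.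
exists (δ / 2), (1 + K); split; first lra.
split; first lra.
move=> y ys yd.
pose p k := cabs2 (y k).
have p0 k : 0 <= p k := cabs2_ge0 _.
have yle1 k : cabs2 (y k) <= 1.
  rewrite -ys; apply: (@term_le_sum _ _ (fun _ => true) (fun k => cabs2 (y k)) k) => //.
  by move=> i _; exact: cabs2_ge0.
have zle1 k : cabs2 (z k) <= 1.
  rewrite -zs; apply: (@term_le_sum _ _ (fun _ => true) (fun k => cabs2 (z k)) k) => //.
  by move=> i _; exact: cabs2_ge0.
pose Q := \sum_j cabs2 (y j - z j).
have Q0 : 0 <= Q by apply: sumr_ge0 => j _; exact: cabs2_ge0.
have hQ : Q < (δ / 2)^+2.
  have hy : Num.sqrt Q < δ / 2 := yd.
  rewrite -(sqr_sqrtr Q0) ltr_pXn2r ?nnegrE ?sqrtr_ge0 //; lra.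
have pd k : `|p k - ps k| < δ.
  have hd := cabs2_diff (y k) (z k) (yle1 k) (zle1 k).
  have hs : cabs2 (y k - z k) <= Q.
    apply: (@term_le_sum _ _ (fun _ => true) (fun j => cabs2 (y j - z j)) k) => //.
    by move=> i _; exact: cabs2_ge0.
  have h2 : (p k - ps k)^+2 < δ^+2.
    have : 4 * (δ / 2)^+2 = δ^+2 by field.
    rewrite /p /ps; lra.
  rewrite -(@ltr_pXn2r _ 2) ?nnegrE ?normr_ge0 ?(ltW δ0) // real_normK ?num_real //.
have KLc := H p p0 ys pd.
change (`|Fr a b p - Fr a b ps| `^ (1 - 4^-1) <=
  (1 + K) * (Num.sqrt 2 * Num.sqrt (\sum_k cabs2 (gvec a b y k)))).
rewrite gvec_norm2 -/p.
move: KLc; set x := `|Fr a b p - Fr a b ps|; set V := Vr a b p => KLc.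
have x0 : 0 <= x by exact: normr_ge0.
have V0 : 0 <= V.
  rewrite /V /Vr; apply: sumr_ge0 => k _; apply: mulr_ge0; [exact: sqr_ge0 | exact: p0].
have u0 : 0 <= x `^ (1 - 4^-1) by exact: powR_ge0.
have v0 : 0 <= (1 + K) * (Num.sqrt 2 * Num.sqrt V).
  apply: mulr_ge0; first lra.
  apply: mulr_ge0; exact: sqrtr_ge0.
rewrite -(@ler_pXn2r _ 4) ?nnegrE //.
have -> : (x `^ (1 - 4^-1))^+4 = x^+3.
  rewrite -powR_mulrn // -powRrM.
  have -> : (1 - 4^-1) * 4%:R = 3%:R :> R by field.
  by rewrite powR_mulrn.
have -> : ((1 + K) * (Num.sqrt 2 * Num.sqrt V))^+4 = (1 + K)^+4 * 4 * V^+2.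
  rewrite !exprMn -mulrA; congr (_ * _).
  have -> : (4 = 2 * 2)%N by [].
  rewrite !exprM !sqr_sqrtr //; last lra.
have K4 : K <= (1 + K)^+4 * 4.
  have h1 : 1 + K <= (1 + K)^+4.
    rewrite exprS -{1}(mulr1 (1 + K)); apply: ler_wpM2l; first lra.
    apply: exprn_ege1; lra.
  lra.
apply: (le_trans KLc); apply: ler_wpM2r => //; exact: sqr_ge0.
Qed.
End Red.
Arguments cabs2_scale {R}.
Arguments cabs2_ge0 {R}.
Arguments cabs2_0 {R}.
Arguments cplx_coef {R}.
Arguments cabs2_diff {R}.
Arguments gvec_norm2 {R n}.
Arguments part_i {R n}.


Section P2.
Variable R : realType.

Lemma contra_pow (b th η δ : R) : 0 < b -> 4^-1 < th -> 0 < η -> 0 < δ ->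
  exists t, 0 < t /\ t <= 2^-1 /\ 2 * t < δ^+2 /\
    8 * η^+2 * b^+2 * t^+3 < ((b * t^+2) `^ (1 - th))^+2.
Proof.
move=> b0 th4 η0 δ0.
pose e := 4 * th - 1.
have e0 : 0 < e by rewrite /e; lra.
pose q := 2 - 2 * th.
have c0 : 0 < 8 * η^+2 * b^+2.
  apply: mulr_gt0; last exact: exprn_gt0.
  apply: mulr_gt0; [lra | exact: exprn_gt0].
pose M := b `^ q / (8 * η^+2 * b^+2).
have M0 : 0 < M by apply: divr_gt0 => //; exact: powR_gt0.
pose t1 := (M / 2) `^ (e^-1).
have t10 : 0 < t1 by apply: powR_gt0; lra.
pose t := Num.min (Num.min (2^-1) (δ^+2 / 4)) t1.
have d20 : 0 < δ^+2 := exprn_gt0 _ δ0.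
have t0 : 0 < t.
  rewrite /t !lt_min t10 andbT; apply/andP; split; lra.
have tA : t <= 2^-1 by rewrite /t !ge_min lexx.
have tB : t <= δ^+2 / 4 by rewrite /t !ge_min lexx orbT.
have tC : t <= t1 by rewrite /t ge_min lexx orbT.
have te : t `^ e <= M / 2.
  have := ge0_ler_powR (ltW e0) _ _ tC.
  rewrite /t1 -powRrM mulVf ?gt_eqF // powRr1; last lra.
  apply; rewrite nnegrE; [exact: ltW | exact: ltW].
have tep : 0 < t `^ e := powR_gt0 _ t0.
exists t; split => //; split => //; split; first lra.
have key : ((b * t^+2) `^ (1 - th))^+2 = b `^ q * (t^+3 * (t `^ e)^-1).
  rewrite -powR_mulrn ?powR_ge0 // -powRrM.
  have -> : (1 - th) * 2%:R = q by rewrite /q; ring.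
  rewrite powRM ?(ltW b0) ?sqr_ge0 //; congr (_ * _).
  rewrite -powR_mulrn ?(ltW t0) // -powRrM.
  have -> : 2%:R * q = 3%:R + - e by rewrite /q /e; ring.
  rewrite powRD; last by rewrite (gt_eqF t0) implybT.
  by rewrite powRN powR_mulrn // ltW.
have h1 : 8 * η^+2 * b^+2 * t `^ e < b `^ q.
  have : t `^ e < M by lra.
  by rewrite /M ltr_pdivlMr // mulrC.
have h2 : 8 * η^+2 * b^+2 < b `^ q / t `^ e by rewrite ltr_pdivlMr.
rewrite key; have -> : b `^ q * (t^+3 * (t `^ e)^-1) = (b `^ q / t `^ e) * t^+3.
  by rewrite mulrCA mulrC.
by rewrite ltr_pM2r // exprn_gt0.
Qed.
Lemma eV_id (b t : R) : (2^-1 * 0 + b * (1 - t) - (b * t + b * ((1 - t) ^+ 2 + t ^+ 2))) ^+ 2 * (1 - t) +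
    (2^-1 * (2 * b) + b * t - (b * t + b * ((1 - t) ^+ 2 + t ^+ 2))) ^+ 2 * t =
    4 * b^+2 * t^+3 - 4 * b^+2 * t^+3 * t.
Proof. field; by []. Qed.

Lemma cabs2C (x : R) : cabs2 ((x%:C)%C) = x^+2.
Proof. by rewrite /cabs2 /= expr0n /= addr0. Qed.

Lemma part_ii n (b : R) : (2 <= n)%N -> 0 < b ->
  exists a : 'I_n -> R, KL_exponent_is a b (4^-1).
Proof.
move=> n2 b0.
have n0 : (0 < n)%N by apply: leq_trans n2.
pose i0 : 'I_n := Ordinal n0.
pose i1 : 'I_n := Ordinal n2.
have i10 : i1 != i0 by [].
have sum2 (F : 'I_n -> R) : (forall k, k != i0 -> k != i1 -> F k = 0) ->
    \sum_k F k = F i0 + F i1.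
  move=> HF; rewrite (bigD1 i0) //= (bigD1 i1) //=.
  rewrite big1 ?addr0 //; move=> k /andP[k0 k1]; exact: HF.
pose a : 'I_n -> R := fun k => if k == i0 then 0 else 2 * b.
exists a; split; first exact: part_i.
move=> th [/andP[th0 th12] Hv].
rewrite leNgt; apply/negP => thgt.
pose z : 'I_n -> R[i] := fun k => if k == i0 then (1%:C)%C else 0.
have zv k : cabs2 (z k) = if k == i0 then 1 else 0.
  rewrite /z; case: (k == i0); [by rewrite cabs2C expr1n | by rewrite cabs2_0].
have zs : on_sphere z.
  rewrite /on_sphere (sum2 (fun k => cabs2 (z k))); last first.
    by move=> k k0 _; rewrite zv (negbTE k0).
  by rewrite !zv eqxx (negbTE i10) addr0.
have lz : lam a b z = b.
  rewrite /lam (sum2 (fun k => a k * cabs2 (z k))); last first.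
    by move=> k k0 _; rewrite zv (negbTE k0) mulr0.
  rewrite (sum2 (fun k => cabs2 (z k) ^+ 2)); last first.
    by move=> k k0 _; rewrite zv (negbTE k0) expr0n.
  rewrite !zv eqxx (negbTE i10) /a eqxx (negbTE i10) /=.
  rewrite expr0n expr1n /=; ring.
have zst : stationary a b z.
  split => // k; rewrite /gvec cplx_coef lz.
  case k0: (k == i0).
    by rewrite zv k0 /a k0 mulr0 add0r mulr1 subrr mul0r.
  by rewrite /z k0 mulr0.
have [δ [η [δ0 [η0 Hk]]]] := Hv z zst.
have th4 : 4^-1 < th by [].
have [t [t0 [t12 [tδ tcon]]]] := contra_pow b th η δ b0 th4 η0 δ0.
pose s := Num.sqrt (1 - t).
have s0 : 0 <= s := sqrtr_ge0 _.
have ss : s^+2 = 1 - t by rewrite sqr_sqrtr; lra.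
have st : (Num.sqrt t)^+2 = t by rewrite sqr_sqrtr; lra.
pose y : 'I_n -> R[i] := fun k => if k == i0 then (s%:C)%C
                                 else if k == i1 then ((Num.sqrt t)%:C)%C else 0.
pose p : 'I_n -> R := fun k => if k == i0 then 1 - t else if k == i1 then t else 0.
have yv k : cabs2 (y k) = p k.
  rewrite /y /p; case: (k == i0); first by rewrite cabs2C ss.
  case: (k == i1).
    by rewrite cabs2C st.
  by rewrite cabs2_0.
have pnz k : k != i0 -> k != i1 -> p k = 0 by move=> k0 k1; rewrite /p (negbTE k0) (negbTE k1).
have p0v : p i0 = 1 - t by rewrite /p eqxx.
have p1v : p i1 = t by rewrite /p (negbTE i10) eqxx.
have ys : on_sphere y.
  rewrite /on_sphere (eq_bigr _ (fun k _ => yv k)) (sum2 p) ?p0v ?p1v; first ring.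
  exact: pnz.
have yd : cnorm (fun k => y k - z k) < δ.
  rewrite /cnorm (sum2 (fun k => cabs2 (y k - z k))); last first.
    by move=> k k0 k1; rewrite /y /z (negbTE k0) (negbTE k1) subr0 cabs2_0.
  rewrite /y /z eqxx (negbTE i10) eqxx subr0 -rmorphB !cabs2C st.
  have s1 : s <= 1 by nra.
  have Q : (s - 1)^+2 + t <= 2 * t by nra.
  have Q0 : 0 <= (s - 1)^+2 + t by have := sqr_ge0 (s - 1); lra.
  rewrite -(@ltr_pXn2r _ 2) ?nnegrE ?sqrtr_ge0 ?(ltW δ0) // sqr_sqrtr //; lra.
have KL := Hk y ys yd.
have eF : fobj a b y - fobj a b z = b * t^+2.
  rewrite /fobj (eq_bigr _ (fun k _ => congr1 (fun x => a k * x) (yv k))).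
  rewrite (eq_bigr _ (fun k _ => congr1 (fun x => x ^+ 2) (yv k))).
  rewrite (sum2 (fun k => a k * p k)); last by move=> k k0 k1; rewrite pnz // mulr0.
  rewrite (sum2 (fun k => p k ^+ 2)); last by move=> k k0 k1; rewrite pnz // expr0n.
  rewrite (sum2 (fun k => a k * cabs2 (z k))); last by move=> k k0 _; rewrite zv (negbTE k0) mulr0.
  rewrite (sum2 (fun k => cabs2 (z k) ^+ 2)); last by move=> k k0 _; rewrite zv (negbTE k0) expr0n.
  rewrite !zv eqxx (negbTE i10) p0v p1v /a eqxx (negbTE i10) /=.
  rewrite expr0n expr1n /=; field; by [].
have eV : \sum_k cabs2 (gvec a b y k) <= 4 * b^+2 * t^+3.
  rewrite gvec_norm2 /Vr /=.
  have qz k : k != i0 -> k != i1 -> cabs2 (y k) = 0 by move=> k0 k1; rewrite yv pnz.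
  have Lq : Lr a b (fun k => cabs2 (y k)) = b * t + b * ((1-t)^+2 + t^+2).
    rewrite /Lr (sum2 (fun k => a k * cabs2 (y k))); last by move=> k k0 k1; rewrite qz // mulr0.
    rewrite (sum2 (fun k => cabs2 (y k) ^+ 2)); last by move=> k k0 k1; rewrite qz // expr0n.
    rewrite !yv p0v p1v /a eqxx (negbTE i10) /=; field; by [].
  rewrite (sum2 (fun k => (2^-1 * a k + b * cabs2 (y k) - Lr a b (fun k => cabs2 (y k)))^+2
      * cabs2 (y k))); last by move=> k k0 k1; rewrite qz // mulr0.
  rewrite Lq !yv p0v p1v /a eqxx (negbTE i10) /=.
  have -> : (2^-1 * 0 + b * (1 - t) - (b * t + b * ((1 - t) ^+ 2 + t ^+ 2))) ^+ 2 * (1 - t) +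
    (2^-1 * (2 * b) + b * t - (b * t + b * ((1 - t) ^+ 2 + t ^+ 2))) ^+ 2 * t =
    4 * b^+2 * t^+3 - 4 * b^+2 * t^+3 * t by apply: eV_id.
  have : 0 <= 4 * b^+2 * t^+3 * t.
    apply: mulr_ge0; last lra. apply: mulr_ge0; last by apply: exprn_ge0; lra.
    apply: mulr_ge0; [lra | exact: sqr_ge0].
  lra.
move: KL; rewrite eF ger0_norm; last by apply: mulr_ge0; [lra | exact: sqr_ge0].
rewrite /gradnorm /cnorm.
move: tcon; set u := (b * t^+2) `^ (1 - th) => tcon.
move: eV; set W := \sum_k cabs2 (gvec a b y k) => eV.
have W0 : 0 <= W by apply: sumr_ge0 => k _; exact: cabs2_ge0.
have u0 : 0 <= u by exact: powR_ge0.
move=> KL.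
have v0 : 0 <= η * (Num.sqrt 2 * Num.sqrt W).
  apply: mulr_ge0; first lra. apply: mulr_ge0; exact: sqrtr_ge0.
have K2 : u^+2 <= (η * (Num.sqrt 2 * Num.sqrt W))^+2 by apply: lerXn2r; rewrite ?nnegrE.
have two0 : (0:R) <= 2 by lra.
move: K2; rewrite !exprMn (sqr_sqrtr two0) (sqr_sqrtr W0).
move=> K2.
have : η^+2 * (2 * W) <= η^+2 * (2 * (4 * b^+2 * t^+3)).
  apply: ler_wpM2l; first exact: sqr_ge0. lra.
lra.
Qed.
End P2.

Arguments part_ii {R n}.

Theorem theorem15 :
  (forall (R : realType) (n : nat) (a : 'I_n -> R) (beta : R),
      0 < beta -> KL_valid a beta (4^-1))
  /\
  (forall (R : realType) (n : nat) (beta : R),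
      (2 <= n)%N -> 0 < beta ->
      exists a : 'I_n -> R, KL_exponent_is a beta (4^-1)).
Proof.
split.
- move=> R n a beta b0; exact: part_i.
- move=> R n beta n2 b0; exact: part_ii.
Qed.
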